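(* Consider the discrete-time system $x_{t+1} = A x_t + B u_t + E w_t + K$ with $x_t \in \mathbb{R}^{n_x}$, $u_t \in U \subseteq \mathbb{R}^{n_u}$, $w_t \in W \subseteq \mathbb{R}^{n_w}$, where $A \in \mathbb{R}^{n_x \times n_x}$ is invertible, $B \in \mathbb{R}^{n_x \times n_u}$, $E \in \mathbb{R}^{n_x \times n_w}$, $K \in \mathbb{R}^{n_x}$, $U$ is a zonotope, and $W$ is a polytope with vertex set $V = \{w_1,\dots,w_M\}$. Let $Z_0 \subseteq \mathbb{R}^{n_x}$ be a zonotope and define the backward reachable sets $X_0 = Z_0$ and, for $k \geq 0$, $$X_{k+1} = \{x \in \mathbb{R}^{n_x} \mid \exists u \in U\ \forall w \in W: Ax + Bu + Ew + K \in X_k\}.$$ Let $H, h$ satisfy $EW = \{x \mid Hx \leq h\}$, and fix constants $b_i > 0$, $d_i \geq 0$. For a zonotope $Z = ([g_1, \dots, g_N], c)$ define $\overline{\mathfrak{Z}}(Z, EW) = ([\overline{\alpha}_1 g_1, \dots, \overline{\alpha}_N g_N], \overline{c})$ where $(\theta, \overline{\alpha}, \overline{c})$ is a minimizer of $\min \sum_i b_i \alpha_i$ subject to $c' + \sum_i \theta_{ij} g_i = E w_j$ for all $j$ and $|\theta_{ij}| \leq \alpha_i \leq 1$, and define $\underline{\mathfrak{Z}}(Z, EW) = ([\underline{\alpha}_1 g_1, \dots, \underline{\alpha}_N g_N], \underline{c})$ where $(\underline{\alpha}, \underline{c})$ is a maximizer of $\max \sum_i d_i \log \alpha_i$ subject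 to $Hc' + |HG|\alpha \leq h$, $0 \leq \alpha \leq 1$ (with $G = [g_1,\dots,g_N]$). Define recursively $\underline{Z}_0 = \overline{Z}_0 = Z_0$ and $$\underline{Z}_{k+1} = A^{-1}\big(((\underline{Z}_k \ominus \overline{\mathfrak{Z}}(\underline{Z}_k, EW)) \oplus (-BU)) + (-K)\big),$$ $$\overline{Z}_{k+1} = A^{-1}\big(((\overline{Z}_k \ominus \underline{\mathfrak{Z}}(\overline{Z}_k, EW)) \oplus (-BU)) + (-K)\big),$$ assuming all the optimization problems involved have optimal solutions (so that these sequences are defined). Then $\underline{Z}_k \subseteq X_k \subseteq \overline{Z}_k$ for all $k \geq 0$.
   Context: A zonotope with generator-representation $(G, c)$, where $G = [g_1, \dots, g_N]$ and $c \in \mathbb{R}^n$, is the set $\{c + \sum_{i=1}^N \theta_i g_i \mid \theta_i \in [-1,1]\}$, denoted $(G,c)$. For a matrix $M$ and set $S$, $MS = \{Ms \mid s \in S\}$. Minkowski sum $X \oplus Y = \{x+y \mid x\in X, y\in Y\}$, $x + Y = \{x\}\oplus Y$, Minkowski difference $X \ominus Y = \{z \mid z + Y \subseteq X\}$. $|HG|$ denotes entrywise absolute value; vector inequalities are entrywise. *)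

(* Defs.v *)
From HB Require Import structures.
From mathcomp Require Import all_boot all_order all_algebra.
From mathcomp Require Import classical_sets boolp reals constructive_ereal ereal exp.
Set Implicit Arguments. Unset Strict Implicit. Unset Printing Implicit Defensive.
Import Order.TTheory GRing.Theory Num.Theory.
Local Open Scope classical_set_scope.
Local Open Scope ring_scope.

(* A zonotope generator-representation (G, c) with G = [g_1 ... g_N]. *)
Record zrep (R : realType) (n : nat) := ZRep {
  zN : nat;
  zG : 'M[R]_(n, zN);
  zc : 'cV[R]_n }.

Section Zono.
Variable R : realType.

Definition zset n (Z : zrep R n) : set 'cV[R]_n :=
  [set x | exists th : 'cV[R]_(zN Z),
     (forall i, `|th i ord0| <= 1) /\ x = zc Z + zG Z *m th].

Definition lev p (x y : 'cV[R]_p) : Prop := forall i, x i ord0 <= y i ord0.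

Definition msum n (X Y : set 'cV[R]_n) : set 'cV[R]_n :=
  [set z | exists x y, X x /\ Y y /\ z = x + y].

Definition mdiff n (X Y : set 'cV[R]_n) : set 'cV[R]_n :=
  [set z | forall y, Y y -> X (z + y)].

Definition linimg m n (M : 'M[R]_(m, n)) (S : set 'cV[R]_n) : set 'cV[R]_m :=
  (fun x => M *m x) @` S.

Definition translate n (v : 'cV[R]_n) (S : set 'cV[R]_n) : set 'cV[R]_n :=
  (fun x => x + v) @` S.

Definition conv_cols n M (Wv : 'M[R]_(n, M)) : set 'cV[R]_n :=
  [set x | exists l : 'cV[R]_M, (forall j, 0 <= l j ord0) /\
     \sum_j l j ord0 = 1 /\ x = Wv *m l].

Definition extreme_point n (W : set 'cV[R]_n) (x : 'cV[R]_n) : Prop :=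
  W x /\ forall y z (t : R), W y -> W z -> 0 < t < 1 ->
    x = t *: y + (1 - t) *: z -> y = x /\ z = x.

Definition polytope_with_vertices n M (W : set 'cV[R]_n) (Wv : 'M[R]_(n, M)) : Prop :=
  W = conv_cols Wv /\ forall x, extreme_point W x <-> exists j, x = col j Wv.

Definition scale_gens n (Z : zrep R n) (a : 'cV[R]_(zN Z)) (c' : 'cV[R]_n) : zrep R n :=
  @ZRep R n (zN Z) (\matrix_(r, i) (a i ord0 * zG Z r i)) c'.

Definition over_feasible n nw M (Z : zrep R n) (E : 'M[R]_(n, nw)) (Wv : 'M[R]_(nw, M))
  (th : 'M[R]_(zN Z, M)) (a : 'cV[R]_(zN Z)) (c' : 'cV[R]_n) : Prop :=
  (forall j : 'I_M, c' + \sum_(i < zN Z) th i j *: col i (zG Z) = E *m col j Wv) /\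
  (forall i j, `|th i j| <= a i ord0) /\ (forall i, a i ord0 <= 1).

Definition over_obj N (b : nat -> R) (a : 'cV[R]_N) : R :=
  \sum_(i < N) b i * a i ord0.

Definition over_minimizer n nw M (Z : zrep R n) (E : 'M[R]_(n, nw)) (Wv : 'M[R]_(nw, M))
  (b : nat -> R) (th : 'M[R]_(zN Z, M)) (a : 'cV[R]_(zN Z)) (c' : 'cV[R]_n) : Prop :=
  over_feasible E Wv th a c' /\
  forall th' a' c'', @over_feasible n nw M Z E Wv th' a' c'' -> over_obj b a <= over_obj b a'.

Definition logE (a : R) : \bar R := if 0 < a then (ln a)%:E else -oo%E.

Definition under_feasible n p (Z : zrep R n) (H : 'M[R]_(p, n)) (h : 'cV[R]_p)
  (a : 'cV[R]_(zN Z)) (c' : 'cV[R]_n) : Prop :=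
  lev (H *m c' + map_mx (fun x => `|x|) (H *m zG Z) *m a) h /\
  (forall i, 0 <= a i ord0 <= 1).

Definition under_obj N (d : nat -> R) (a : 'cV[R]_N) : \bar R :=
  (\sum_(i < N) ((d i)%:E * logE (a i ord0)))%E.

Definition under_maximizer n p (Z : zrep R n) (H : 'M[R]_(p, n)) (h : 'cV[R]_p)
  (d : nat -> R) (a : 'cV[R]_(zN Z)) (c' : 'cV[R]_n) : Prop :=
  under_feasible H h a c' /\
  forall a' c'', @under_feasible n p Z H h a' c'' -> (under_obj d a' <= under_obj d a)%E.

Fixpoint Xback nx nu nw (A : 'M[R]_nx) (B : 'M[R]_(nx, nu)) (E : 'M[R]_(nx, nw))
  (K : 'cV[R]_nx) (U : set 'cV[R]_nu) (W : set 'cV[R]_nw) (X0 : set 'cV[R]_nx)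
  (k : nat) : set 'cV[R]_nx :=
  match k with
  | 0 => X0
  | k'.+1 => [set x | exists u, U u /\ forall w, W w ->
               Xback A B E K U W X0 k' (A *m x + B *m u + E *m w + K)]
  end.

Definition step_set nx nu (A : 'M[R]_nx) (B : 'M[R]_(nx, nu)) (K : 'cV[R]_nx)
  (U : set 'cV[R]_nu) (Z Zs : set 'cV[R]_nx) : set 'cV[R]_nx :=
  linimg (invmx A)
    (translate (- K) (msum (mdiff Z Zs) (linimg (- B) U))).

End Zono.

Arguments over_minimizer {R n nw M} Z E Wv b th a c'.
Arguments under_maximizer {R n p} Z H h d a c'.
Arguments scale_gens {R n} Z a c'.

(* Main.v *)
Require Import Defs.
From HB Require Import structures.
From mathcomp Require Import all_boot all_order all_algebra.
From mathcomp Require Import classical_sets boolp reals constructive_ereal ereal exp.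
Import Order.TTheory GRing.Theory Num.Theory.
Local Open Scope classical_set_scope.
Local Open Scope ring_scope.
Section S.
Variable R : realType.

Lemma lower_step nx nu nw (A : 'M[R]_nx) (B : 'M[R]_(nx,nu)) (E : 'M[R]_(nx,nw)) K
  (U : set 'cV[R]_nu) (W : set 'cV[R]_nw) (Zk Zs X : set 'cV[R]_nx) :
  A \in unitmx -> Zk `<=` X -> (forall w, W w -> Zs (E *m w)) ->
  step_set A B K U Zk Zs `<=` [set x | exists u, U u /\ forall w, W w ->
      X (A *m x + B *m u + E *m w + K)].
Proof.
move=> uA sub hs _ [y [_ [z [m' [Hz [[u Uu <-] ->]]]] <-] <-].
exists u; split=> // w Ww.
rewrite mulKVmx //.
have -> : z + - B *m u + - K + B *m u + E *m w + K = z + E *m w.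
  by rewrite mulNmx (addrAC (z - _) (- K)) addrNK (addrAC (z - K)) addrNK.
exact/sub/Hz/hs.
Qed.

Lemma upper_step nx nu nw (A : 'M[R]_nx) (B : 'M[R]_(nx,nu)) (E : 'M[R]_(nx,nw)) K
  (U : set 'cV[R]_nu) (W : set 'cV[R]_nw) (Zk Zs X : set 'cV[R]_nx) :
  A \in unitmx -> X `<=` Zk -> (forall y, Zs y -> exists2 w, W w & y = E *m w) ->
  [set x | exists u, U u /\ forall w, W w -> X (A *m x + B *m u + E *m w + K)]
   `<=` step_set A B K U Zk Zs.
Proof.
move=> uA sub hs x [u [Uu Hx]].
exists (A *m x); last by rewrite mulKmx.
exists (A *m x + K); last by rewrite addrK.
exists (A *m x + K + B *m u), (- B *m u); split; last split.
- move=> y /hs [w Ww ->]. apply: sub.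
  by rewrite (addrAC _ K) (addrAC _ K); apply: Hx.
- by exists u.
- by rewrite mulNmx addrK.
Qed.

Lemma over_in n nw M (Z : zrep R n) (E : 'M[R]_(n, nw)) (Wv : 'M[R]_(nw,M)) th a c' :
  over_feasible E Wv th a c' -> forall w, conv_cols Wv w ->
  zset (scale_gens Z a c') (E *m w).
Proof.
case=> Hj [Hth _] _ [l [l0 [l1 ->]]].
pose t i := \sum_j l j ord0 * th i j.
have tle i : `|t i| <= a i ord0.
  apply: (le_trans (ler_norm_sum _ _ _)).
  apply: le_trans (_ : \sum_j l j ord0 * a i ord0 <= _).
    apply: ler_sum => j _; rewrite normrM ger0_norm //.
    exact: ler_wpM2l.
  by rewrite -big_distrl /= l1 mul1r.
have t0 i : a i ord0 = 0 -> t i = 0.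
  by move=> a0; apply/normr0_eq0/eqP; rewrite eq_le normr_ge0 andbT -a0.
exists (\col_i (if a i ord0 == 0 then 0 else t i / a i ord0)).
split.
- move=> i; rewrite mxE; case: eqP => [_|/eqP a0]; first by rewrite normr0 ler01.
  have ap : 0 < a i ord0 by rewrite lt_def a0 (le_trans (normr_ge0 _) (tle i)).
  by rewrite normrM normfV (gtr0_norm ap) ler_pdivrMr // mul1r.
- rewrite mulmxA; apply/matrixP => r c; rewrite ord1 !mxE /=.
  have -> : \sum_j (\matrix_(r0, i) (a i ord0 * zG Z r0 i)) r j *
     (\col_i (if a i ord0 == 0 then 0 else t i / a i ord0)) j ord0
     = \sum_i zG Z r i * t i.
    apply: eq_bigr => i _; rewrite !mxE; case: eqP => [a0|/eqP a0].
      by rewrite (t0 i a0) a0 !mul0r mulr0.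
    by rewrite mulrAC mulrCA divff // mulr1 mulrC.
  have EW j : (E *m Wv) r j = c' r ord0 + \sum_i th i j * zG Z r i.
    have := congr1 (fun m : 'cV[R]_n => m r ord0) (Hj j); rewrite /= !mxE summxE.
    have -> : \sum_k E r k * col j Wv k ord0 = \sum_k E r k * Wv k j.
      by apply: eq_bigr => k _; rewrite mxE.
    move=> HH; rewrite -HH; congr (_ + _); by apply: eq_bigr => i _; rewrite !mxE.
  under eq_bigr => j _ do rewrite EW mulrDl.
  rewrite big_split /= -big_distrr /= l1 mulr1; congr (_ + _).
  under eq_bigr => j _ do rewrite big_distrl /=.
  rewrite exchange_big /=; apply: eq_bigr => i _.
  rewrite /t big_distrr /=; apply: eq_bigr => j _.
  by rewrite [RHS]mulrC mulrAC (mulrC (th i j)).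
Qed.

Lemma under_in n p (Z : zrep R n) (H : 'M[R]_(p, n)) h a c' :
  under_feasible H h a c' -> forall y, zset (scale_gens Z a c') y -> lev (H *m y) h.
Proof.
case=> Hl Ha y [th [Hth ->]] q.
apply: le_trans (Hl q).
rewrite mulmxDr mxE [X in _ <= X]mxE lerD2l mulmxA !mxE.
apply: ler_sum => i _; rewrite !mxE.
have -> : \sum_j H q j * (\matrix_(r, i0) (a i0 ord0 * zG Z r i0)) j i
   = a i ord0 * \sum_j H q j * zG Z j i.
  by rewrite big_distrr; apply: eq_bigr => j _; rewrite mxE mulrCA.
have [a0 a1] := andP (Ha i).
apply: le_trans (ler_norm _) _.
rewrite !normrM (ger0_norm a0) (mulrC (a i ord0)).
by rewrite ler_piMr ?mulr_ge0 // Hth.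
Qed.
End S.
Theorem proposition5 (R : realType) (nx nu nw M p : nat)
  (A : 'M[R]_nx) (B : 'M[R]_(nx, nu)) (E : 'M[R]_(nx, nw)) (K : 'cV[R]_nx)
  (ZU : zrep R nu) (W : set 'cV[R]_nw) (Wv : 'M[R]_(nw, M))
  (Z0 : zrep R nx) (H : 'M[R]_(p, nx)) (h : 'cV[R]_p)
  (b d : nat -> R) (Zlo Zup : nat -> zrep R nx) :
  A \in unitmx ->
  polytope_with_vertices W Wv ->
  (fun w => E *m w) @` W = [set x | lev (H *m x) h] ->
  (forall i, 0 < b i) -> (forall i, 0 <= d i) ->
  Zlo 0%N = Z0 -> Zup 0%N = Z0 ->
  (forall k, exists th a c',
      over_minimizer (Zlo k) E Wv b th a c' /\
      zset (Zlo k.+1) =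
        step_set A B K (zset ZU) (zset (Zlo k)) (zset (scale_gens (Zlo k) a c'))) ->
  (forall k, exists a c',
      under_maximizer (Zup k) H h d a c' /\
      zset (Zup k.+1) =
        step_set A B K (zset ZU) (zset (Zup k)) (zset (scale_gens (Zup k) a c'))) ->
  forall k, zset (Zlo k) `<=` Xback A B E K (zset ZU) W (zset Z0) k /\
            Xback A B E K (zset ZU) W (zset Z0) k `<=` zset (Zup k).
Proof.
move=> uA [WE _] himg _ _ lo0 up0 Hlo Hup.
elim=> [|k [IHlo IHup]].
  by rewrite /= lo0 up0; split.
split.
- have [th [a [c' [[Hf _] ->]]]] := Hlo k.
  move=> x Hx /=.
  apply: (@lower_step R nx nu nw A B E K (zset ZU) W _ _ _ uA IHlo _ x Hx) => w Ww; apply: (@over_in _ _ _ _ _ _ _ _ _ _ Hf); rewrite -WE.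
  exact: Ww.
- have [a [c' [[Hf _] ->]]] := Hup k.
  apply: (@upper_step R nx nu nw A B E K (zset ZU) W _ _ _ uA IHup).
  move=> y /(@under_in _ _ _ _ _ _ _ _ Hf) Hy.
  have : [set x | lev (H *m x) h] y by [].
  rewrite -himg => -[w Ww <-].
  by exists w.
Qed.
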